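(* Consider the following recursive procedure on input $(T,C,w)$, where $T=(V,E)$ is a tree, $w:V\to\mathbb R_{\ge0}$, and $C$ is a partial coloring with domain $\mathrm{support}(w)=\{v:w(v)>0\}$: if $V\setminus\mathrm{support}(w)$ is a cover of $(T,C)$, return $X=V\setminus\mathrm{support}(w)$; otherwise choose two pairs of (not necessarily distinct) vertices $(x_1,x_2)$, $(y_1,y_2)$ in $\mathrm{support}(w)$ with $C(x_1)=C(x_2)\neq C(y_1)=C(y_2)$ and $\mathrm{carrier}(\{x_1,x_2\})\cap\mathrm{carrier}(\{y_1,y_2\})\neq\emptyset$, let $\varepsilon=\min\{w(x_1),w(x_2),w(y_1),w(y_2)\}$, let $w_1=w-\varepsilon\cdot\mathbf 1_{\{x_1,x_2,y_1,y_2\}}$, and return the output of the procedure on $(T,C|_{\mathrm{support}(w_1)},w_1)$. Then the procedure is well defined (whenever $V\setminus\mathrm{support}(w)$ is not a cover, such pairs exist), terminates, and returns a cover $X$ of $(T,C)$ with $w(X)\le 4\,\mathrm{OPT}(T,C,w)$.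
   Context: For $U\subseteq V$, $\mathrm{carrier}(U)$ is the minimal connected subtree of $T$ containing $U$. A partial coloring of a tree is convex if it can be extended to a total coloring in which every color class induces a connected subtree. A set $X\subseteq V$ is a cover of $(T,C)$ if the restriction of $C$ to $\mathrm{Domain}(C)\setminus X$ is convex. $w(X)=\sum_{v\in X}w(v)$, and $\mathrm{OPT}(T,C,w)$ is the minimum of $w(X)$ over all covers $X$. *)

(* Defs.v *)
From mathcomp Require Import all_boot all_order all_algebra.
Set Implicit Arguments. Unset Strict Implicit. Unset Printing Implicit Defensive.
Import Order.TTheory GRing.Theory Num.Theory.
Local Open Scope ring_scope.

Section Defs.
Variables (V : finType) (K : eqType).

(* T = (V, e) is a tree: e symmetric, irreflexive, connected, and every edge
   is a bridge (minimally connected, i.e. acyclic). *)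
Definition remove_edge (e : rel V) (u v : V) : rel V :=
  fun a b => e a b && ~~ (((a == u) && (b == v)) || ((a == v) && (b == u))).

Definition is_tree (e : rel V) : Prop :=
  [/\ symmetric e, irreflexive e, (forall x y, connect e x y)
    & forall u v, e u v -> ~~ connect (remove_edge e u v) u v].

(* S induces a connected subgraph of T (the empty set counts as connected). *)
Definition induced (e : rel V) (S : {set V}) : rel V :=
  fun a b => [&& a \in S, b \in S & e a b].

Definition connectedb (e : rel V) (S : {set V}) : bool :=
  [forall x in S, forall y in S, connect (induced e S) x y].

Definition carrier (e : rel V) (U : {set V}) : {set V} :=
  \bigcap_(S : {set V} | connectedb e S && (U \subset S)) S.

(* Partial colorings: C v = None means v is uncolored. *)
Definition Domain (C : V -> option K) : {set V} := [set v | C v != None].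

Definition restrict (C : V -> option K) (S : {set V}) : V -> option K :=
  fun v => if v \in S then C v else None.

(* convex: extendable to a total coloring (colors in option K, None serving as
   an additional fresh color) in which every color class is connected. *)
Definition convex (e : rel V) (C : V -> option K) : Prop :=
  exists f : V -> option K,
    (forall v, v \in Domain C -> f v = C v) /\
    (forall c : option K, connectedb e [set v | f v == c]).

Definition is_cover (e : rel V) (C : V -> option K) (X : {set V}) : Prop :=
  convex e (restrict C (Domain C :\: X)).

Variable R : realFieldType.

Definition wsupp (w : V -> R) : {set V} := [set v | 0 < w v].

Definition weight (w : V -> R) (X : {set V}) : R := \sum_(v in X) w v.

Definition valid_choice (e : rel V) (C : V -> option K) (w : V -> R)
    (x1 x2 y1 y2 : V) : Prop :=
  [/\ [&& x1 \in wsupp w, x2 \in wsupp w, y1 \in wsupp w & y2 \in wsupp w],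
      C x1 = C x2, C y1 = C y2, C x1 != C y1
    & carrier e [set x1; x2] :&: carrier e [set y1; y2] != set0].

Definition eps_of (w : V -> R) (x1 x2 y1 y2 : V) : R :=
  Num.min (Num.min (w x1) (w x2)) (Num.min (w y1) (w y2)).

Definition new_weight (w : V -> R) (x1 x2 y1 y2 : V) : V -> R :=
  fun v => if v \in [set x1; x2; y1; y2] then w v - eps_of w x1 x2 y1 y2 else w v.

Definition proc_step (e : rel V) (p p' : (V -> option K) * (V -> R)) : Prop :=
  ~ is_cover e p.1 (~: wsupp p.2) /\
  exists x1 x2 y1 y2,
    valid_choice e p.1 p.2 x1 x2 y1 y2 /\
    p'.2 = new_weight p.2 x1 x2 y1 y2 /\
    p'.1 = restrict p.1 (wsupp (new_weight p.2 x1 x2 y1 y2)).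

(* proc_returns e C w X : some run of the (nondeterministic) procedure on
   input (T, C, w) returns X. *)
Inductive proc_returns (e : rel V) : (V -> option K) -> (V -> R) -> {set V} -> Prop :=
| ret_base C w :
    is_cover e C (~: wsupp w) -> proc_returns e C w (~: wsupp w)
| ret_step C w x1 x2 y1 y2 X :
    ~ is_cover e C (~: wsupp w) ->
    valid_choice e C w x1 x2 y1 y2 ->
    proc_returns e (restrict C (wsupp (new_weight w x1 x2 y1 y2)))
                   (new_weight w x1 x2 y1 y2) X ->
    proc_returns e C w X.

End Defs.

(* Main.v *)
Require Import Defs.
From Stdlib Require Import Classical.
From mathcomp Require Import all_boot all_order all_algebra zify lra.
Import Order.TTheory GRing.Theory Num.Theory.

Lemma connectedbP {V : finType} {e : rel V} {S : {set V}} x y :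
  connectedb e S -> x \in S -> y \in S -> connect (induced e S) x y.
Proof. by move=> /forallP/(_ x)/implyP H xS yS; move/(_ xS)/forallP/(_ y)/implyP: H; apply. Qed.

Lemma induced_sym {V : finType} {e : rel V} {S : {set V}} :
  symmetric e -> symmetric (induced e S).
Proof. by move=> se a b; rewrite /induced se; case: (a \in S); case: (b \in S). Qed.

Lemma induced_mono {V : finType} {e : rel V} {S T : {set V}} :
  T \subset S -> forall a b, induced e T a b -> connect (induced e S) a b.
Proof.
move=> /subsetP TS a b /and3P[aT bT eab]; apply: connect1.
by rewrite /induced (TS a aT) (TS b bT).
Qed.

Lemma conn_via {V : finType} {e : rel V} {S : {set V}} v :
  symmetric e -> (forall x, x \in S -> connect (induced e S) x v) -> connectedb e S.
Proof.
move=> se H; apply/forallP => x; apply/implyP => xS; apply/forallP => y; apply/implyP => yS.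
apply: connect_trans (H x xS) _.
by rewrite (sym_connect_sym (@induced_sym _ _ S se)); apply: H.
Qed.

Lemma remove_edge_sym {V : finType} {e : rel V} u v :
  symmetric e -> symmetric (remove_edge e u v).
Proof.
move=> se a b; rewrite /remove_edge se; congr (_ && _).
by case: (a == u); case: (b == v); case: (a == v); case: (b == u).
Qed.

Lemma path_in_conn {V : finType} {e : rel V} {S : {set V}} :
  is_tree e -> connectedb e S ->
  forall p x, x \in S -> last x p \in S -> path e x p -> uniq (x :: p) -> all (mem S) p.
Proof.
move=> [se ie ce br] cS; elim=> [//|a p IH] x xS /= lS /andP[exa pa] /andP[xn up].
have aS : a \in S.
  apply/negPn/negP => aS.
  have c1 : connect (remove_edge e x a) x (last a p).
    move: (connectedbP _ _ cS xS lS); apply: connect_sub => s t /and3P[sS tS est].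
    apply: connect1; rewrite /remove_edge est /=.
    by apply/negP => /orP[] /andP[/eqP E1 /eqP E2]; move: aS; rewrite -?E1 -?E2 ?sS ?tS.
  have c2 : connect (remove_edge e x a) a (last a p).
    apply/connectP; exists p => //.
    apply: (sub_in_path (P := [pred z | z != x])) pa.
      move=> s t /= sx tx est; rewrite /remove_edge est /=.
      by rewrite (negbTE sx) (negbTE tx) !andbF.
    apply/allP => z zin /=; apply/eqP => Ez.
    by move: xn; rewrite -Ez zin.
  rewrite (sym_connect_sym (@remove_edge_sym _ _ x a se)) in c2.
  by move: (br x a exa); rewrite (connect_trans c1 c2).
by rewrite aS /=; exact: (IH a aS lS pa up).
Qed.

Lemma sub_carrier {V : finType} {e : rel V} (U : {set V}) : U \subset carrier e U.
Proof. by apply/subsetP => x xU; apply/bigcapP => S /andP[_ /subsetP]; apply. Qed.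

Lemma carrier_min {V : finType} {e : rel V} (U S : {set V}) :
  connectedb e S -> U \subset S -> carrier e U \subset S.
Proof. by move=> cS US; apply: bigcap_inf; rewrite cS US. Qed.

Lemma carrier_conn {V : finType} {e : rel V} (U : {set V}) :
  is_tree e -> connectedb e (carrier e U).
Proof.
move=> tr; have [se ie ce br] := tr.
apply/forallP => x; apply/implyP => xC; apply/forallP => y; apply/implyP => yC.
case/connectP: (ce x y) => p px Ey; subst y.
move: yC; case: (shortenP px) => p' pp' up' _ yC.
apply/connectP; exists p' => //.
apply: (sub_in_path (P := mem (carrier e U))) (pp').
  by move=> s t /= sC tC est; rewrite /induced sC tC est.
apply/andP; split; first exact: xC.
apply/allP => z zin; apply/bigcapP => S /andP[cS US].
have xS : x \in S by move/bigcapP: xC; apply; rewrite cS.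
have yS : last x p' \in S by move/bigcapP: yC; apply; rewrite cS.
by have /allP := path_in_conn tr cS p' x xS yS pp' up'; apply.
Qed.

Lemma carrier0 {V : finType} {e : rel V} : carrier e (set0 : {set V}) = set0.
Proof.
apply/eqP; rewrite -subset0; apply: carrier_min => //.
by apply/forallP => x; rewrite in_set0.
Qed.

Lemma carrier_pairs {V : finType} {e : rel V} (A : {set V}) z :
  is_tree e -> z \in carrier e A ->
  exists2 a1, a1 \in A & exists2 a2, a2 \in A & z \in carrier e [set a1; a2].
Proof.
move=> tr; have [se ie ce br] := tr.
case: (set_0Vmem A) => [-> | [a0 a0A]]; first by rewrite carrier0 in_set0.
set S := \bigcup_(a in A) carrier e [set a0; a].
have cS : connectedb e S.
  apply: (conn_via a0 se) => x /bigcupP[a aA xC].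
  have a0C : a0 \in carrier e [set a0; a].
    by apply: (subsetP (sub_carrier _)); rewrite !inE eqxx.
  move: (connectedbP _ _ (carrier_conn [set a0; a] tr) xC a0C).
  apply: connect_sub => s t; apply: induced_mono.
  by apply/subsetP => v vC; apply/bigcupP; exists a.
have AS : A \subset S.
  apply/subsetP => a aA; apply/bigcupP; exists a => //.
  by apply: (subsetP (sub_carrier _)); rewrite !inE eqxx orbT.
move/(subsetP (carrier_min _ _ cS AS)) => /bigcupP[a aA zC].
by exists a0 => //; exists a.
Qed.

Lemma conn_add {V : finType} {e : rel V} (S : {set V}) u v :
  symmetric e -> connectedb e S -> v \in S -> e v u -> connectedb e (u |: S).
Proof.
move=> se cS vS evu; apply: (conn_via v se) => x; rewrite in_setU1 => /orP[/eqP-> | xS].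
  by apply: connect1; rewrite /induced !in_setU1 eqxx vS orbT se evu.
move: (connectedbP _ _ cS xS vS); apply: connect_sub => s t; apply: induced_mono.
exact: subsetUr.
Qed.

Lemma cross {V : finType} {e : rel V} (D : {set V}) v u :
  v \in D -> u \notin D -> connect e v u -> exists a b, [/\ a \in D, b \notin D & e a b].
Proof.
move=> vD uD /connectP[p pp Eu]; subst u.
elim: p v vD pp uD => [|b p IH] v vD /=; first by rewrite vD.
move=> /andP[evb pb] lD; case bD: (b \in D); first exact: IH bD pb lD.
by exists v, b; rewrite bD.
Qed.

Definition cls {V : finType} {K : eqType} (f : V -> option K) (D : {set V}) (c : option K)
  : {set V} := [set v in D | f v == c].

Definition Good {V : finType} {K : eqType} (e : rel V) (f : V -> option K) (D : {set V}) : Prop :=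
  forall c d, c != d -> carrier e (cls f D c) :&: carrier e (cls f D d) = set0.

Definition upd {V : finType} {K : eqType} (f : V -> option K) u c : V -> option K :=
  fun v => if v == u then c else f v.

Lemma cls_upd {V : finType} {K : eqType} (f : V -> option K) (D : {set V}) u c (d : option K) :
  u \notin D -> cls (upd f u c) (u |: D) d = if d == c then u |: cls f D d else cls f D d.
Proof.
move=> uD; apply/setP => v; rewrite /cls /upd.
case: (eqVneq d c) => [-> | dc]; rewrite !inE; case: (eqVneq v u) => [-> | vu] //=.
- by rewrite eqxx.
- by rewrite (negbTE uD) andFb eq_sym (negbTE dc).
Qed.

Lemma step_ok {V : finType} {K : eqType} (e : rel V) (f : V -> option K) (D : {set V}) u c :
  Good e f D -> u \notin D ->
  (forall d, d != c -> carrier e (u |: cls f D c) :&: carrier e (cls f D d) = set0) ->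
  Good e (upd f u c) (u |: D).
Proof.
move=> G uD H c1 c2 n12; rewrite !cls_upd //.
case: (eqVneq c1 c) => [E1 | n1]; case: (eqVneq c2 c) => [E2 | n2].
- by move: n12; rewrite E1 E2 eqxx.
- by rewrite E1; apply: H.
- by rewrite E2 setIC; apply: H.
- exact: G.
Qed.

Lemma goodT_conn {V : finType} {K : eqType} (e : rel V) (f : V -> option K) :
  is_tree e -> Good e f setT -> forall c, connectedb e [set v | f v == c].
Proof.
move=> tr G c.
have E : [set v | f v == c] = carrier e (cls f setT c).
  apply/eqP; rewrite eqEsubset; apply/andP; split.
    apply/subsetP => v vc; apply: (subsetP (@sub_carrier _ e _)).
    by rewrite !inE in vc *.
  apply/subsetP => z zC; rewrite inE; apply/negPn/negP => nz.
  have nz' : c != f z by rewrite eq_sym.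
  have := G c (f z) nz' => /setP /(_ z).
  rewrite in_set0 inE zC /= => /negbT/negP; apply.
  by apply: (subsetP (@sub_carrier _ e _)); rewrite !inE eqxx.
by rewrite E; apply: carrier_conn.
Qed.

Lemma extend {V : finType} {K : eqType} (e : rel V) n : forall (f : V -> option K) D,
  is_tree e -> #|~: D| <= n -> Good e f D ->
  exists g, (forall v, v \in D -> g v = f v) /\ Good e g setT.
Proof.
elim: n => [|n IH] f D tr hn G.
  have D0 : ~: D = set0 by apply/eqP; rewrite -cards_eq0 -leqn0.
  have DT : D = setT by rewrite -(setCK D) D0 setC0.
  by exists f; split => //; rewrite -DT.
have [se ie ce br] := tr.
case: (set_0Vmem (~: D)) => [D0 | [u0]].
  have DT : D = setT by rewrite -(setCK D) D0 setC0.
  by exists f; split => //; rewrite -DT.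
rewrite inE => u0D.
suff [u [c [uD Gu]]] : exists u c, u \notin D /\ Good e (upd f u c) (u |: D).
  have hn' : #|~: (u |: D)| <= n.
    have := cardsC (u |: D); have := cardsC D; rewrite cardsU1 uD /= => h1 h2; lia.
  have [g [ag Gg]] := IH _ _ tr hn' Gu.
  exists g; split => // v vD; rewrite ag ?inE ?vD ?orbT // /upd.
  by case: eqP => // Ev; move: uD; rewrite -Ev vD.
case: (boolP [exists u, exists a, [&& u \notin D, a \in D & u \in carrier e (cls f D (f a))]]).
  move/existsP => [u /existsP [a /and3P[uD aD uC]]].
  exists u, (f a); split => //; apply: step_ok => // d nd.
  have sub : carrier e (u |: cls f D (f a)) \subset carrier e (cls f D (f a)).
    apply: carrier_min; first exact: carrier_conn.
    apply/subsetP => v; rewrite in_setU1 => /orP[/eqP-> // | ].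
    exact: (subsetP (sub_carrier _)).
  apply/eqP; rewrite -subset0; apply: subset_trans (setSI _ sub) _.
  by rewrite subset0 G // eq_sym.
move=> nA.
case: (set_0Vmem D) => [D0 | [v0 v0D]].
  exists u0, None; split => //; apply: step_ok => // d nd.
  have E : cls f D d = set0 by apply/setP => v; rewrite !inE D0 in_set0.
  by rewrite E carrier0 setI0.
have [a [b [aD bD eab]]] := cross D v0 u0 v0D u0D (ce v0 u0).
exists b, (f a); split => //; apply: step_ok => // d nd.
have aC : a \in carrier e (cls f D (f a)).
  by apply: (subsetP (@sub_carrier _ e _)); rewrite !inE aD eqxx.
have sub : carrier e (b |: cls f D (f a)) \subset b |: carrier e (cls f D (f a)).
  apply: carrier_min; first exact: conn_add se (carrier_conn _ tr) aC eab.
  by apply: setUS; apply: sub_carrier.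
apply/setP => z; rewrite in_set0; apply/negP => /setIP[zN zd].
move: (subsetP sub z zN); rewrite in_setU1 => /orP[/eqP Ez | zc].
  case: (set_0Vmem (cls f D d)) => [E0 | [a' a'd]].
    by move: zd; rewrite E0 carrier0 in_set0.
  move: a'd; rewrite inE => /andP[a'D /eqP fa'].
  move/existsPn: nA => /(_ b) /existsPn /(_ a').
  by rewrite bD a'D fa' -Ez zd.
have nd' : f a != d by rewrite eq_sym.
have := G (f a) d nd' => /setP /(_ z).
by rewrite in_set0 inE zc zd.
Qed.

Lemma good_convex {V : finType} {K : eqType} (e : rel V) (C : V -> option K) :
  is_tree e -> Good e C (Domain C) -> convex e C.
Proof.
move=> tr G.
have [g [ag Gg]] := extend e #|~: Domain C| C (Domain C) tr (leqnn _) G.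
by exists g; split; [exact: ag | exact: goodT_conn].
Qed.

Local Open Scope ring_scope.

Lemma convex_sub {V : finType} {K : eqType} (e : rel V) (C1 C2 : V -> option K) :
  (forall v, v \in Domain C2 -> C2 v = C1 v) -> convex e C1 -> convex e C2.
Proof.
move=> H [f [ag cf]]; exists f; split => // v vD.
rewrite H // ag // inE -H //; by rewrite inE in vD.
Qed.


Lemma eps_facts {V : finType} {R : realFieldType} (w : V -> R) x1 x2 y1 y2 :
  [&& x1 \in wsupp w, x2 \in wsupp w, y1 \in wsupp w & y2 \in wsupp w] ->
  [/\ 0 < eps_of w x1 x2 y1 y2,
      (forall v, v \in [set x1; x2; y1; y2] -> eps_of w x1 x2 y1 y2 <= w v)
    & exists2 m, m \in [set x1; x2; y1; y2] & w m = eps_of w x1 x2 y1 y2].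
Proof.
rewrite !inE => /and4P[h1 h2 h3 h4]; split.
- by rewrite /eps_of !lt_min h1 h2 h3 h4.
- move=> v; rewrite !inE.
  move=> /orP[/orP[/orP[H|H]|H]|H]; move/eqP: H => ->; rewrite /eps_of !ge_min lexx ?orbT //.
- have mE : forall a b : R, Num.min a b = a \/ Num.min a b = b.
    by move=> a b; rewrite minEle; case: ifP; [left|right].
  rewrite /eps_of; have [->|->] := mE (Num.min (w x1) (w x2)) (Num.min (w y1) (w y2)).
    have [->|->] := mE (w x1) (w x2).
      by exists x1; rewrite ?inE ?eqxx ?orbT.
    by exists x2; rewrite ?inE ?eqxx ?orbT.
  have [->|->] := mE (w y1) (w y2).
    by exists y1; rewrite ?inE ?eqxx ?orbT.
  by exists y2; rewrite ?inE ?eqxx ?orbT.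
Qed.

Lemma step_dec {V : finType} {K : eqType} {R : realFieldType} (e : rel V)
  (p q : (V -> option K) * (V -> R)) : proc_step e p q -> (#|wsupp q.2| < #|wsupp p.2|)%N.
Proof.
move=> [_ [x1 [x2 [y1 [y2 [[hs _ _ _ _] [-> _]]]]]]].
have [ep ele [m mS wm]] := eps_facts _ _ _ _ _ hs.
apply: proper_card; apply/properP; split.
  apply/subsetP => v; rewrite !inE /new_weight; case: ifP => // vS; lra.
exists m; first by rewrite inE wm.
by rewrite inE /new_weight mS wm subrr ltxx.
Qed.

Lemma acc_n {V : finType} {K : eqType} {R : realFieldType} (e : rel V) n :
  forall p : (V -> option K) * (V -> R), (#|wsupp p.2| < n)%N ->
  Acc (fun q p => proc_step e p q) p.
Proof.
elim: n => [|n IH] p hp; first by [].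
constructor => q st; apply: IH; have := step_dec _ _ _ st; lia.
Qed.

Lemma card4 {V : finType} (x1 x2 y1 y2 : V) : (#|[set x1; x2; y1; y2]| <= 4)%N.
Proof.
apply: leq_trans (leq_card_setU _ _) _; rewrite cards1 addn1 ltnS.
apply: leq_trans (leq_card_setU _ _) _; rewrite cards1 addn1 ltnS.
by apply: leq_trans (leq_card_setU _ _) _; rewrite !cards1.
Qed.

Lemma part3 {V : finType} {K : eqType} {R : realFieldType} (e : rel V)
  (C : V -> option K) (w : V -> R) X :
  proc_returns e C w X -> (forall v, 0 <= w v) -> Domain C = wsupp w ->
  [/\ ~: wsupp w \subset X, is_cover e C X &
      forall Y, is_cover e C Y -> weight w X <= 4 * weight w Y].
Proof.
elim=> {C w X} [C w cov | C w x1 x2 y1 y2 X nc vc _ IH] nn HD.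
  split => // Y _.
  have -> : weight w (~: wsupp w) = 0.
    rewrite /weight big1 // => v; rewrite !inE -leNgt => h.
    by apply/eqP; rewrite eq_le h nn.
  by rewrite mulr_ge0 // /weight sumr_ge0.
have HDv : forall v, (C v != None) = (0 < w v).
  by move=> v; move/setP: HD => /(_ v); rewrite !inE.
case: vc => hs c12 c34 c13 cI.
have [ep ele [m mS wm]] := eps_facts _ _ _ _ _ hs.
set S := [set x1; x2; y1; y2] in ele mS.
set eps := eps_of w x1 x2 y1 y2 in ep ele wm.
set w1 := new_weight w x1 x2 y1 y2 in IH.
have w1E : forall v, w1 v = if v \in S then w v - eps else w v by [].
have nn1 : forall v, 0 <= w1 v.
  move=> v; rewrite w1E; case: ifP => vS; last exact: nn.
  by have := ele v vS; lra.
have sub1 : wsupp w1 \subset wsupp w.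
  apply/subsetP => v; rewrite !inE w1E; case: ifP => // _; lra.
have HD1 : Domain (restrict C (wsupp w1)) = wsupp w1.
  apply/setP => v; rewrite !inE /restrict !inE; case: ifP => [vs|vs]; last by rewrite eqxx.
  by rewrite HDv; move/subsetP: sub1 => /(_ v); rewrite !inE => /(_ vs).
have [sX covX bnd] := IH nn1 HD1.
have sX' : ~: wsupp w \subset X by apply: subset_trans sX; rewrite setCS.
split => //.
  rewrite /is_cover; apply: convex_sub covX => v.
  rewrite inE /restrict HD1; case: ifP => [/setDP[vD vX] _ | _]; last by rewrite eqxx.
  have vs1 : v \in wsupp w1.
    apply/negPn/negP => h; move/subsetP: sX => /(_ v); rewrite inE h => /(_ isT).
    by rewrite (negbTE vX).
  by rewrite in_setD vX vs1.
move=> Y covY.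
have covY' : is_cover e (restrict C (wsupp w1)) Y.
  rewrite /is_cover HD1; apply: convex_sub covY => v.
  rewrite inE /restrict; case: ifP => [/setDP[vs vY] | _]; last by rewrite eqxx.
  rewrite vs => _.
  have vD : v \in Domain C by rewrite HD (subsetP sub1).
  by rewrite in_setD vD vY.
have b := bnd Y covY'.
have hit : (0 < #|Y :&: S|)%N.
  case: (set_0Vmem (Y :&: S)) => [E0|[z hz]]; last by apply/card_gt0P; exists z.
  exfalso; case: covY => f [ag cf].
  have xnY : forall x, x \in S -> x \notin Y.
    by move=> x xS; apply/negP => xY; move/setP: E0 => /(_ x); rewrite in_set0 inE xY xS.
  have fx : forall x, x \in S -> x \in wsupp w -> f x = C x.
    move=> x xS xw.
    have rE : restrict C (Domain C :\: Y) x = C x.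
      by rewrite /restrict in_setD HD xw (xnY x xS).
    by rewrite ag ?rE // inE rE HDv; rewrite inE in xw.
  move/and4P: hs => [h1 h2 h3 h4].
  have cx : carrier e [set x1; x2] \subset [set v | f v == C x1].
    apply: carrier_min; first exact: cf.
    apply/subsetP => v; rewrite !inE => /orP[] /eqP ->.
      by rewrite fx // /S !inE eqxx.
    by rewrite fx // ?c12 // /S !inE eqxx ?orbT.
  have cy : carrier e [set y1; y2] \subset [set v | f v == C y1].
    apply: carrier_min; first exact: cf.
    apply/subsetP => v; rewrite !inE => /orP[] /eqP ->.
      by rewrite fx // /S !inE eqxx ?orbT.
    by rewrite fx // ?c34 // /S !inE eqxx ?orbT.
  case/set0Pn: cI => z /setIP[zx zy].
  move: (subsetP cx z zx) (subsetP cy z zy); rewrite !inE => /eqP -> /eqP E.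
  by move: c13; rewrite E eqxx.
have wdec : forall Z, weight w Z = weight w1 Z + eps *+ #|Z :&: S|.
  move=> Z; rewrite /weight.
  rewrite (eq_bigr (fun v => w1 v + (if v \in S then eps else 0))); last first.
    by move=> v _; rewrite w1E; case: ifP => _; rewrite ?subrK ?addr0.
  rewrite big_split /=; congr (_ + _).
  rewrite (big_setID S) /= (eq_bigr (fun _ => eps)); last first.
    by move=> v /setIP[_ ->].
  rewrite sumr_const big1 ?addr0 // => v /setDP[_ /negbTE ->].
  by [].
have cX : (#|X :&: S| <= 4)%N.
  by apply: leq_trans (card4 x1 x2 y1 y2); apply: subset_leq_card; apply: subsetIr.
rewrite !wdec -(mulr_natr eps #|X :&: S|) -(mulr_natr eps #|Y :&: S|).
have hX : (#|X :&: S|%:R : R) <= 4 by rewrite (ler_nat R _ 4).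
have hY : 1 <= (#|Y :&: S|%:R : R) by rewrite ler1n.
have e0 : 0 <= eps by lra.
nra.
Qed.


Theorem mainTheorem6 (V : finType) (K : eqType) (R : realFieldType)
    (e : rel V) (C : V -> option K) (w : V -> R) :
  is_tree e ->
  (forall v, 0 <= w v) ->
  Domain C = wsupp w ->
  [/\ (~ is_cover e C (~: wsupp w) ->
        exists x1 x2 y1 y2, valid_choice e C w x1 x2 y1 y2),
      Acc (fun q p => proc_step e p q) (C, w)
    & forall X, proc_returns e C w X ->
        is_cover e C X /\
        (forall Y, is_cover e C Y -> weight w X <= 4 * weight w Y)].
Proof.
move=> tr nn HD; split.
- move=> nc; apply: NNPP => nex; apply: nc.
  rewrite /is_cover; apply: good_convex (tr) _.
  set C0 := restrict C (Domain C :\: ~: wsupp w).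
  have HC0 : forall c' v, v \in cls C0 (Domain C0) c' -> v \in wsupp w /\ C v = c'.
    move=> c' v; rewrite !inE /C0 /restrict.
    case: ifP => [/setDP[vD _] | _] /andP[nn' /eqP cv]; last by rewrite eqxx in nn'.
    by split => //; move: vD; rewrite HD inE.
  move=> c d cd; apply/eqP; rewrite -subset0; apply/subsetP => z /setIP[zc zd].
  have [x1 x1c [x2 x2c zx]] := carrier_pairs _ _ tr zc.
  have [y1 y1c [y2 y2c zy]] := carrier_pairs _ _ tr zd.
  have [hx1 cx1] := HC0 _ _ x1c; have [hx2 cx2] := HC0 _ _ x2c.
  have [hy1 cy1] := HC0 _ _ y1c; have [hy2 cy2] := HC0 _ _ y2c.
  exfalso; apply: nex; exists x1, x2, y1, y2; split.
  + by rewrite hx1 hx2 hy1 hy2.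
  + by rewrite cx1 cx2.
  + by rewrite cy1 cy2.
  + by rewrite cx1 cy1.
  + by apply/set0Pn; exists z; rewrite inE zx zy.
- exact: (acc_n e (#|wsupp w|.+1) (C, w) (ltnSn _)).
- by move=> X pr; have [_ ? ?] := part3 _ _ _ _ pr nn HD; split.
Qed.
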